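(* Let $m\ge1$. The map sending the double coset $\Gamma(4m)\,g\,\Gamma_\ell(2)$ of $g\in\Gamma_{2m}(2)$ to the cohomology class of $f_{\tau(g)g^{-1}}$ is a well-defined bijection $$\Gamma(4m)\backslash\Gamma_{2m}(2)/\Gamma_\ell(2)\ \cong\ H^1(\mathbb C/\mathbb R,\Gamma(4m))$$ (induced by the short exact sequence $1\to\Gamma(4m)\to\Gamma_{2m}(2)\to\Gamma(4m)\backslash\Gamma_{2m}(2)\to1$).
   Context: $\mathbf{Sp}(2n,\mathbb Z)$: integral $2n\times2n$ matrices $g=\begin{pmatrix}A&B\\C&D\end{pmatrix}$ with ${}^tgJg=J$, $J=\begin{pmatrix}0&I\\-I&0\end{pmatrix}$. $\tau\begin{pmatrix}A&B\\C&D\end{pmatrix}=\begin{pmatrix}A&-B\\-C&D\end{pmatrix}$. $\Gamma(4m)=\{\gamma\in\mathbf{Sp}(2n,\mathbb Z):\gamma\equiv I\bmod4m\}$; $\Gamma_{2m}(2)=\{\begin{pmatrix}A&B\\C&D\end{pmatrix}\in\mathbf{Sp}(2n,\mathbb Z):A,D\equiv I\bmod2,\ B,C\equiv0\bmod2m\}$; $\Gamma_\ell(2)=\{U\in\mathbf{GL}(n,\mathbb Z):U\equiv I\bmod2\}$ embedded via $U\mapsto\mathrm{diag}(U,{}^tU^{-1})$. For $\gamma\in\Gamma(4m)$ with $\gamma\tau(\gamma)=I$, $f_\gamma$ is the 1-cocycle of $\mathrm{Gal}(\mathbb C/\mathbb R)=\{1,\tau\}$ with $f_\gamma(\tau)=\gamma$;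 $f_\gamma,f_{\gamma'}$ are cohomologous if $\gamma'=\tau(h)\gamma h^{-1}$ for some $h\in\Gamma(4m)$; $H^1(\mathbb C/\mathbb R,\Gamma(4m))$ is the set of classes. *)

(* Defs.v *)
From HB Require Import structures.
From mathcomp Require Import all_boot all_order all_algebra.
Set Implicit Arguments. Unset Strict Implicit. Unset Printing Implicit Defensive.
Import Order.TTheory GRing.Theory Num.Theory.
Local Open Scope ring_scope.

Notation imx n := 'M[int]_(n + n).

Definition congr_mx (k : int) (p q : nat) (A B : 'M[int]_(p, q)) : Prop :=
  forall i j, (k %| A i j - B i j)%Z.

Definition Jmx (n : nat) : imx n := block_mx 0 1%:M (- 1%:M) 0.

Definition symplectic (n : nat) (g : imx n) : Prop := g^T *m Jmx n *m g = Jmx n.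

Definition tau (n : nat) (g : imx n) : imx n :=
  block_mx (ulsubmx g) (- ursubmx g) (- dlsubmx g) (drsubmx g).

Definition Gamma4m (n m : nat) (g : imx n) : Prop :=
  symplectic g /\ congr_mx (4 * m)%N%:Z g 1%:M.

Definition Gamma2m2 (n m : nat) (g : imx n) : Prop :=
  [/\ symplectic g,
      congr_mx 2 (ulsubmx g) 1%:M, congr_mx 2 (drsubmx g) 1%:M,
      congr_mx (2 * m)%N%:Z (ursubmx g) 0 & congr_mx (2 * m)%N%:Z (dlsubmx g) 0].

Definition Gammal2 (n : nat) (h : imx n) : Prop :=
  exists U : 'M[int]_n,
    [/\ U \in unitmx, congr_mx 2 U 1%:M & h = block_mx U 0 0 (invmx U^T)].

(* 1-cocycles: gamma in Gamma(4m) with gamma tau(gamma) = I *)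
Definition cocycle (n m : nat) (c : imx n) : Prop :=
  Gamma4m m c /\ c *m tau c = 1%:M.

(* f_c and f_c' cohomologous: c' = tau(h) c h^{-1}, h in Gamma(4m) *)
Definition cohomologous (n m : nat) (c c' : imx n) : Prop :=
  exists h : imx n, Gamma4m m h /\ c' = tau h *m c *m invmx h.

Definition same_dcoset (n m : nat) (g g' : imx n) : Prop :=
  exists a u : imx n, [/\ Gamma4m m a, Gammal2 u & g' = a *m g *m u].

Definition cocycle_of (n : nat) (g : imx n) : imx n := tau g *m invmx g.

(* Main.v *)
Require Import Defs.
From HB Require Import structures.
From mathcomp Require Import all_boot all_order all_algebra.
From mathcomp Require Import zify.
Set Implicit Arguments. Unset Strict Implicit. Unset Printing Implicit Defensive.
Import Order.TTheory GRing.Theory Num.Theory.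
Local Open Scope ring_scope.



Section Infra.
Variable n : nat.
Implicit Types g h : imx n.

Definition Dm : imx n := block_mx 1%:M 0 0 (- 1%:M).

Lemma DmK : Dm *m Dm = 1%:M.
Proof.
rewrite /Dm mulmx_block !(mulmx0, mul0mx, addr0, add0r, mulmx1, mulNmx, opprK).
by rewrite mul1mx opprK -scalar_mx_block.
Qed.

Lemma DmT : Dm^T = Dm.
Proof. by rewrite /Dm tr_block_mx !trmx0 trmx1 linearN /= trmx1. Qed.

Lemma tauE g : tau g = Dm *m g *m Dm.
Proof.
rewrite -[g]submxK /tau /Dm block_mxKul block_mxKur block_mxKdl block_mxKdr !mulmx_block.
by rewrite !(mulmx0, mul0mx, addr0, add0r, mulmx1, mul1mx, mulNmx, mulmxN, opprK).
Qed.

Lemma JT : (Jmx n)^T = - Jmx n.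
Proof.
by rewrite /Jmx tr_block_mx !trmx0 trmx1 linearN /= trmx1 opp_block_mx !oppr0 opprK.
Qed.

Lemma JJ : Jmx n *m Jmx n = - 1%:M.
Proof.
rewrite /Jmx mulmx_block !(mulmx0, mul0mx, addr0, add0r, mulmx1, mulNmx, mulmxN, mul1mx).
by rewrite [in RHS]scalar_mx_block opp_block_mx !oppr0.
Qed.

Lemma DJD : Dm *m Jmx n *m Dm = - Jmx n.
Proof.
rewrite /Dm /Jmx !mulmx_block !(mulmx0, mul0mx, addr0, add0r, mulmx1, mulNmx, mulmxN, mul1mx, opprK).
by rewrite opp_block_mx !oppr0 opprK.
Qed.

Lemma inv_uniq g h : g \in unitmx -> g *m h = 1%:M -> invmx g = h.
Proof. by move=> ug gh; rewrite -[h](mulKmx ug) gh mulmx1. Qed.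

Lemma sympl_inv_eq g : symplectic g -> (- Jmx n *m g^T *m Jmx n) *m g = 1%:M.
Proof. by move=> s; rewrite -!mulmxA (mulmxA g^T) s mulNmx JJ opprK. Qed.

Lemma sympl_unit g : symplectic g -> g \in unitmx.
Proof. by move=> /sympl_inv_eq /mulmx1_unit []. Qed.

Lemma invmxM g h : g \in unitmx -> h \in unitmx -> invmx (g *m h) = invmx h *m invmx g.
Proof.
move=> ug uh; apply: inv_uniq; first by rewrite unitmx_mul ug.
by rewrite -mulmxA (mulmxA h) mulmxV // mul1mx mulmxV.
Qed.

Lemma sympl1 : symplectic (1%:M : imx n).
Proof. by rewrite /symplectic trmx1 mul1mx mulmx1. Qed.

Lemma sympl_mul g h : symplectic g -> symplectic h -> symplectic (g *m h).
Proof.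
move=> sg sh; rewrite /symplectic trmx_mul.
have -> : h^T *m g^T *m Jmx n *m (g *m h) = h^T *m (g^T *m Jmx n *m g) *m h by rewrite !mulmxA.
by rewrite sg.
Qed.

Lemma sympl_inv g : symplectic g -> symplectic (invmx g).
Proof.
move=> sg; have ug := sympl_unit sg.
transitivity ((invmx g)^T *m (g^T *m Jmx n *m g) *m invmx g); first by rewrite sg.
by rewrite !mulmxA -trmx_mul mulmxV // trmx1 mul1mx mulmxK.
Qed.

Lemma DJD' m (X : 'M[int]_(m, n + n)) : X *m Dm *m Jmx n *m Dm = - (X *m Jmx n).
Proof. by rewrite -!mulmxA (mulmxA Dm) DJD mulmxN. Qed.

Lemma sympl_D g : symplectic g -> symplectic (Dm *m g *m Dm).
Proof.
move=> sg; rewrite /symplectic !trmx_mul DmT !mulmxA DJD' !mulNmx.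
by rewrite -(mulmxA Dm g^T) -(mulmxA Dm (g^T *m Jmx n)) sg DJD opprK.
Qed.

Lemma sympl_tau g : symplectic g -> symplectic (tau g).
Proof. by rewrite tauE; apply: sympl_D. Qed.

End Infra.



Definition cong (k : int) p q (A B : 'M[int]_(p, q)) := exists K, A - B = k *: K.

Lemma congrP (k : int) p q (A B : 'M[int]_(p, q)) : congr_mx k A B <-> cong k A B.
Proof.
split=> [H | [K e] i j].
  exists (\matrix_(i, j) ((A i j - B i j) %/ k)%Z); apply/matrixP => i j.
  by rewrite !mxE mulrC divzK // -(mxE_bin (fun x y => x - y)) ?H // ; rewrite !mxE.
have -> : A i j - B i j = (A - B) i j by rewrite !mxE.
by rewrite e mxE dvdz_mulr.
Qed.

Section Cong.
Variable k : int.

Lemma cong_refl p q (A : 'M[int]_(p, q)) : cong k A A.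
Proof. by exists 0; rewrite subrr scaler0. Qed.

Lemma cong_sym p q (A B : 'M[int]_(p, q)) : cong k A B -> cong k B A.
Proof. by case=> K e; exists (- K); rewrite scalerN -e opprB. Qed.

Lemma cong_trans p q (A B C : 'M[int]_(p, q)) : cong k A B -> cong k B C -> cong k A C.
Proof.
case=> K1 e1 [K2 e2]; exists (K1 + K2).
by rewrite scalerDr -e1 -e2 addrA subrK.
Qed.

Lemma cong_add p q (A B C D : 'M[int]_(p, q)) : cong k A B -> cong k C D -> cong k (A + C) (B + D).
Proof.
case=> K1 e1 [K2 e2]; exists (K1 + K2).
by rewrite scalerDr -e1 -e2 opprD addrACA.
Qed.

Lemma cong_opp p q (A B : 'M[int]_(p, q)) : cong k A B -> cong k (- A) (- B).
Proof. by case=> K e; exists (- K); rewrite scalerN -e opprB opprK addrC. Qed.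

Lemma cong_mull p q r (M : 'M[int]_(r, p)) (A B : 'M[int]_(p, q)) :
  cong k A B -> cong k (M *m A) (M *m B).
Proof. by case=> K e; exists (M *m K); rewrite -mulmxBr e scalemxAr. Qed.

Lemma cong_mulr p q r (M : 'M[int]_(q, r)) (A B : 'M[int]_(p, q)) :
  cong k A B -> cong k (A *m M) (B *m M).
Proof. by case=> K e; exists (K *m M); rewrite -mulmxBl e scalemxAl. Qed.

Lemma cong_mul p q r (A A' : 'M[int]_(p, q)) (B B' : 'M[int]_(q, r)) :
  cong k A A' -> cong k B B' -> cong k (A *m B) (A' *m B').
Proof. by move=> h1 h2; apply: cong_trans (cong_mull A h2) (cong_mulr B' h1). Qed.

Lemma cong_zero p q (K : 'M[int]_(p, q)) : cong k (k *: K) 0.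
Proof. by exists K; rewrite subr0. Qed.

Lemma cong_inv p (g : 'M[int]_p) : g \in unitmx -> cong k g 1%:M -> cong k (invmx g) 1%:M.
Proof.
move=> ug [K e]; exists (- (invmx g *m K)).
rewrite scalerN scalemxAr -e mulmxBr mulVmx // opprB.
by rewrite -{1}[invmx g]mulmx1.
Qed.

Lemma cong_ul p1 p2 q1 q2 (A B : 'M[int]_(p1 + p2, q1 + q2)) :
  cong k A B -> cong k (ulsubmx A) (ulsubmx B).
Proof.
case=> K /matrixP e; exists (ulsubmx K); apply/matrixP=> i j.
by have := e (lshift _ i) (lshift _ j); rewrite !mxE.
Qed.
Lemma cong_ur p1 p2 q1 q2 (A B : 'M[int]_(p1 + p2, q1 + q2)) :
  cong k A B -> cong k (ursubmx A) (ursubmx B).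
Proof.
case=> K /matrixP e; exists (ursubmx K); apply/matrixP=> i j.
by have := e (lshift _ i) (rshift _ j); rewrite !mxE.
Qed.
Lemma cong_dl p1 p2 q1 q2 (A B : 'M[int]_(p1 + p2, q1 + q2)) :
  cong k A B -> cong k (dlsubmx A) (dlsubmx B).
Proof.
case=> K /matrixP e; exists (dlsubmx K); apply/matrixP=> i j.
by have := e (rshift _ i) (lshift _ j); rewrite !mxE.
Qed.
Lemma cong_dr p1 p2 q1 q2 (A B : 'M[int]_(p1 + p2, q1 + q2)) :
  cong k A B -> cong k (drsubmx A) (drsubmx B).
Proof.
case=> K /matrixP e; exists (drsubmx K); apply/matrixP=> i j.
by have := e (rshift _ i) (rshift _ j); rewrite !mxE.
Qed.

Lemma cong_block p1 p2 q1 q2 (A1 B1 : 'M[int]_(p1, q1)) (A2 B2 : 'M[int]_(p1, q2))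
  (A3 B3 : 'M[int]_(p2, q1)) (A4 B4 : 'M[int]_(p2, q2)) :
  cong k A1 B1 -> cong k A2 B2 -> cong k A3 B3 -> cong k A4 B4 ->
  cong k (block_mx A1 A2 A3 A4) (block_mx B1 B2 B3 B4).
Proof.
case=> K1 e1 [K2 e2] [K3 e3] [K4 e4]; exists (block_mx K1 K2 K3 K4).
by rewrite opp_block_mx add_block_mx e1 e2 e3 e4 scale_block_mx.
Qed.

End Cong.

Lemma cong_dvd (k k' : int) p q (A B : 'M[int]_(p, q)) :
  (k %| k')%Z -> cong k' A B -> cong k A B.
Proof.
case/dvdzP=> c -> [K e]; exists (c *: K); by rewrite e scalerA mulrC.
Qed.

Lemma cong_u (k : int) p1 p2 q (A B : 'M[int]_(p1 + p2, q)) :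
  cong k A B -> cong k (usubmx A) (usubmx B).
Proof.
case=> K /matrixP e; exists (usubmx K); apply/matrixP=> i j.
by have := e (lshift _ i) j; rewrite !mxE.
Qed.

Lemma cong_d (k : int) p1 p2 q (A B : 'M[int]_(p1 + p2, q)) :
  cong k A B -> cong k (dsubmx A) (dsubmx B).
Proof.
case=> K /matrixP e; exists (dsubmx K); apply/matrixP=> i j.
by have := e (rshift _ i) j; rewrite !mxE.
Qed.

Lemma cong_tr (k : int) p q (A B : 'M[int]_(p, q)) :
  cong k A B -> cong k A^T B^T.
Proof. by case=> K e; exists K^T; rewrite -linearB /= e linearZ. Qed.

Lemma F2_1 (x : 'F_2) : x != 0 -> x = 1.
Proof. case: x => [[|[|k]]] //= Hk _; apply/val_inj => //=. Qed.

Lemma cong2_F2 p q (A B : 'M[int]_(p, q)) :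
  cong 2 A B <-> map_mx (intr : int -> 'F_2) A = map_mx (intr : int -> 'F_2) B.
Proof.
split=> [/congrP H | /matrixP H]; last (apply/congrP => i j).
  apply/matrixP=> i j; rewrite !mxE; apply/eqP; rewrite -subr_eq0 -rmorphB /=.
  by rewrite -(dvdz_pcharf (pchar_Fp (isT : prime 2))) H.
rewrite (dvdz_pcharf (pchar_Fp (isT : prime 2))) rmorphB /= subr_eq0.
by have := H i j; rewrite !mxE => ->.
Qed.

Lemma addI2 p q (A B : 'M[int]_(p, q)) : A + A = B + B -> A = B.
Proof.
move/matrixP=> e; apply/matrixP=> i j; have := e i j; rewrite !mxE.
move/eqP; rewrite -subr_eq0 opprD addrACA -mulr2n mulrn_eq0 /= subr_eq0.
by move/eqP.
Qed.



Section Parts.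
Variables n m : nat.
Implicit Types g h : imx n.

Lemma DmK' p (X : 'M[int]_(p, n + n)) : X *m Dm n *m Dm n = X.
Proof. by rewrite -mulmxA DmK mulmx1. Qed.

Lemma tau_mul g h : tau (g *m h) = tau g *m tau h.
Proof. by rewrite !tauE !mulmxA DmK'. Qed.

Lemma twice (K : 'M[int]_(n, n)) :
  - ((2 * m)%N%:Z *: K) - (2 * m)%N%:Z *: K = (4 * m)%N%:Z *: - K.
Proof.
by rewrite -opprD -scalerDl -PoszD scalerN -mulnDl.
Qed.

Lemma tau_cong g : Gamma2m2 m g -> cong (4 * m)%N%:Z (tau g) g.
Proof.
case=> sg hA hD /congrP [KB eB] /congrP [KC eC].
move: eB eC; rewrite !subr0 => eB eC.
exists (block_mx 0 (- KB) (- KC) 0).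
rewrite /tau -[X in _ - X]submxK opp_block_mx add_block_mx scale_block_mx.
by rewrite !subrr !scaler0 eB eC !twice.
Qed.

Lemma part1 g : Gamma2m2 m g -> cocycle m (cocycle_of g).
Proof.
move=> hg; have [sg _ _ _ _] := hg; have ug := sympl_unit sg.
split; last first.
  rewrite /cocycle_of !tauE !mulmxA DmK' mulmxKV // DmK' mulmxK //.
  exact: DmK.
split; first exact: sympl_mul (sympl_tau sg) (sympl_inv sg).
apply/congrP; rewrite /cocycle_of -(mulmxV ug).
exact: cong_mulr (tau_cong hg).
Qed.

Lemma tau_diag (U V : 'M[int]_n) : tau (block_mx U 0 0 V) = block_mx U 0 0 V.
Proof. by rewrite /tau block_mxKul block_mxKur block_mxKdl block_mxKdr !oppr0. Qed.

Lemma part2 g g' : Gamma2m2 m g -> same_dcoset m g g' -> cohomologous m (cocycle_of g) (cocycle_of g').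
Proof.
move=> hg; case=> a [u [ha hu ->]]; exists a; split=> //.
have [sa _] := ha; have ua := sympl_unit sa.
case: hu => U [uU _ eu].
have uu : u \in unitmx by rewrite eu block_diag_mx_unit uU unitmx_inv unitmx_tr.
have tu : tau u = u by rewrite eu tau_diag.
have [sg _ _ _ _] := hg; have ug := sympl_unit sg.
rewrite /cocycle_of !tau_mul tu invmxM ?unitmx_mul ?ua // invmxM //.
by rewrite !mulmxA mulmxK.
Qed.

Lemma g_cong2 g : Gamma2m2 m g -> cong 2 g 1%:M.
Proof.
case=> _ /congrP hA /congrP hD /congrP hB /congrP hC.
have d2 : (2 %| (2 * m)%N%:Z)%Z by rewrite PoszM dvdz_mulr.
rewrite -[g]submxK (scalar_mx_block n n 1); apply: cong_block => //.
  exact: cong_dvd d2 hB.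
exact: cong_dvd d2 hC.
Qed.

Lemma h_cong2 h : Gamma4m m h -> cong 2 h 1%:M.
Proof.
case=> _ /congrP hh; apply: cong_dvd hh.
by rewrite (_ : 4 * m = 2 * (2 * m))%N ?PoszM ?dvdz_mulr // mulnA.
Qed.

Lemma opp_self p q (A : 'M[int]_(p, q)) : A = - A -> A = 0.
Proof.
move/matrixP=> e; apply/matrixP=> i j; have := e i j; rewrite !mxE => /eqP; rewrite -subr_eq0 opprK -mulr2n mulrn_eq0 /= . by move/eqP.
Qed.

Lemma part3 g g' : Gamma2m2 m g -> Gamma2m2 m g' ->
  cohomologous m (cocycle_of g) (cocycle_of g') -> same_dcoset m g g'.
Proof.
move=> hg hg' [h [hh e]].
have [sg _ _ _ _] := hg; have ug := sympl_unit sg.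
have [sg' _ _ _ _] := hg'; have ug' := sympl_unit sg'.
have [sh _] := hh; have uh := sympl_unit sh.
have uhg : h *m g \in unitmx by rewrite unitmx_mul uh.
set x := invmx g *m invmx h *m g'.
have ex : g' = h *m g *m x by rewrite /x !mulmxA mulmxK // mulmxV // mul1mx.
exists h, x; split => //.
have sx : symplectic x by rewrite /x; apply: sympl_mul (sympl_mul (sympl_inv sg) (sympl_inv sh)) sg'.
have e1 : tau g' = tau (h *m g) *m x.
  move: e; rewrite /cocycle_of => /(congr1 (mulmx^~ g')) /=.
  by rewrite mulmxKV // tau_mul /x !mulmxA.
have cx2 : cong 2 x 1%:M.
  have := cong_mul (cong_mul (cong_inv ug (g_cong2 hg)) (cong_inv uh (h_cong2 hh))) (g_cong2 hg').
  by rewrite !mul1mx.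
clearbody x; move: ex e1 uhg; set hg0 := h *m g => ex e1 uhg; clearbody hg0.
have cx : x *m Dm n = Dm n *m x.
  move: e1; rewrite !tauE => /(congr1 (mulmx (Dm n))).
  rewrite !mulmxA DmK !mul1mx {1}ex => /(congr1 (mulmx (invmx hg0))).
  by rewrite !mulmxA mulVmx // !mul1mx.
have ebx : x = block_mx (ulsubmx x) 0 0 (drsubmx x).
  move: cx; rewrite -{1 2}[x]submxK /Dm !mulmx_block.
  rewrite !(mulmx0, mul0mx, addr0, add0r, mulmx1, mul1mx, mulmxN, mulNmx).
  case/eq_block_mx => _ /esym /opp_self e2 /opp_self e3 _.
  by rewrite -{1}[x]submxK e2 e3.
move: sx cx2; rewrite ebx; set U := ulsubmx x; set V := drsubmx x => sx cx2.
have UV : U^T *m V = 1%:M.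
  move: sx; rewrite /symplectic /Jmx tr_block_mx !trmx0 !mulmx_block.
  rewrite !(mulmx0, mul0mx, addr0, add0r, mulmx1, mul1mx, mulmxN, mulNmx).
  by case/eq_block_mx.
have uUT : U^T \in unitmx by case: (mulmx1_unit UV).
exists U; split.
- by rewrite -unitmx_tr.
- apply/congrP; have := cong_ul cx2.
  by rewrite block_mxKul (scalar_mx_block n n 1) block_mxKul.
- by rewrite -[V](mulKmx uUT) UV mulmx1.
Qed.

End Parts.



Section P4.
Variables (n m : nat) (c K : imx n).
Hypotheses (sc : symplectic c) (eK : c - 1%:M = (4 * m)%N%:Z *: K)
  (ct : c *m tau c = 1%:M).

Local Notation D := (Dm n).
Local Notation J := (Jmx n).
Definition E1 : imx n := block_mx 1%:M 0 0 0.
Definition E2 : imx n := block_mx 0 0 0 1%:M.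
Variables (sg Pp Pm : imx n).
Hypotheses (esg : sg = D *m c) (ePp : Pp = E1 + (2 * m)%N%:Z *: (D *m K))
  (ePm : Pm = E2 - (2 * m)%N%:Z *: (D *m K)).

Lemma sgsg : sg *m sg = 1%:M.
Proof.
have := mulmx1C ct; rewrite tauE esg.
by rewrite !mulmxA.
Qed.

Lemma sgJ : sg^T *m J *m sg = - J.
Proof.
by rewrite esg trmx_mul DmT !mulmxA DJD' mulNmx sc.
Qed.

Lemma PpPm : Pp + Pm = 1%:M.
Proof.
rewrite ePp ePm addrACA subrr addr0 /E1 /E2 add_block_mx !addr0 add0r.
by rewrite -scalar_mx_block.
Qed.

Lemma PmE : Pm = 1%:M - Pp.
Proof. by rewrite -PpPm addrC addKr. Qed.

Lemma twiceZ p q (X : 'M[int]_(p, q)) :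
  (2 * m)%N%:Z *: X + (2 * m)%N%:Z *: X = (4 * m)%N%:Z *: X.
Proof. by rewrite -scalerDl -PoszD -mulnDl. Qed.

Lemma sgE : sg = D + (4 * m)%N%:Z *: (D *m K).
Proof.
rewrite esg; have -> : c = 1%:M + (4 * m)%N%:Z *: K by rewrite -eK addrC subrK.
by rewrite mulmxDr mulmx1 scalemxAr.
Qed.

Lemma E1E1 : E1 + E1 = 1%:M + D.
Proof.
rewrite /E1 /Dm add_block_mx (scalar_mx_block n n 1) add_block_mx !addr0.
by rewrite subrr.
Qed.

Lemma Pp2 : Pp + Pp = 1%:M + sg.
Proof.
by rewrite ePp addrACA twiceZ E1E1 sgE addrA.
Qed.

Lemma sgPp : sg *m Pp = Pp.
Proof.
have h : sg *m (Pp + Pp) = Pp + Pp by rewrite Pp2 mulmxDr mulmx1 sgsg addrC.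
by apply: addI2; rewrite -[RHS]h mulmxDr.
Qed.

Lemma sgPm : sg *m Pm = - Pm.
Proof.
apply: addI2; rewrite -mulmxDr -opprD.
have -> : Pm + Pm = 1%:M - sg.
  by rewrite PmE addrACA -opprD Pp2 opprD addrA addrK.
by rewrite mulmxBr mulmx1 sgsg opprB.
Qed.

Lemma negneg p q (X : 'M[int]_(n + n, p)) (Y : 'M[int]_(n + n, q)) :
  (- X)^T *m J *m (- Y) = X^T *m J *m Y.
Proof.
have tN : (- X)^T = - X^T by apply/matrixP=> i j; rewrite !mxE.
by rewrite tN !(mulNmx, mulmxN) opprK. Qed.

Lemma iso p q (X : 'M[int]_(n + n, p)) (Y : 'M[int]_(n + n, q)) :
  (sg *m X = X /\ sg *m Y = Y) \/ (sg *m X = - X /\ sg *m Y = - Y) ->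
  X^T *m J *m Y = 0.
Proof.
move=> H; apply: opp_self.
have key : (sg *m X)^T *m J *m (sg *m Y) = - (X^T *m J *m Y).
  rewrite trmx_mul.
  have -> : X^T *m sg^T *m J *m (sg *m Y) = X^T *m (sg^T *m J *m sg) *m Y by rewrite !mulmxA.
  by rewrite sgJ mulmxN mulNmx.
case: H => [[eX eY] | [eX eY]]; move: key; rewrite eX eY // => <-.
by rewrite negneg.
Qed.

Lemma smith_part : exists2 Bp : 'M[int]_(n + n, n),
  sg *m Bp = Bp /\ cong 2 (usubmx Bp) 1%:M &
  exists W : 'M[int]_(n + n, n), Bp^T *m J *m W = 1%:M.
Proof.
set X0 := Pp *m col_mx 1%:M (0 : 'M[int]_(n, n)).
have sX0 : sg *m X0 = X0 by rewrite /X0 mulmxA sgPp.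
have cX0 : cong 2 (usubmx X0) 1%:M.
  have : cong ((2 * m)%N%:Z) X0 (col_mx 1%:M 0).
    exists (D *m K *m col_mx 1%:M 0); rewrite /X0 ePp mulmxDl -scalemxAl.
    have -> : E1 *m col_mx 1%:M (0 : 'M[int]_(n, n)) = col_mx 1%:M 0.
      by rewrite /E1 mul_block_col !mul0mx mul1mx !addr0.
    by rewrite addrC addKr.
  move=> /cong_u; rewrite col_mxKu => h; apply: cong_dvd h.
  by rewrite PoszM dvdz_mulr.
case: (int_Smith_normal_form X0) => L uL [R uR [d _ eX]].
set Dl : 'M[int]_n := diag_mx (\row_(j < n) d`_j).
set Q := L *m col_mx 1%:M (0 : 'M[int]_(n, n)).
have eSd : (\matrix_(i, j) (d`_i *+ (i == j :> nat)) : 'M[int]_(n + n, n))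
    = col_mx 1%:M 0 *m Dl.
  rewrite mul_col_mx mul1mx mul0mx; apply/matrixP=> i j; rewrite !mxE.
  case: splitP => k ek; rewrite !mxE ?ek //=.
  have /negbTE -> : (n + k)%N != j by rewrite neq_ltn ltn_addr ?orbT.
  by rewrite mulr0n.
have eX' : X0 = Q *m Dl *m R by rewrite eX eSd /Q !mulmxA.
have uX : usubmx X0 = usubmx Q *m Dl *m R by rewrite eX' -!mul_usub_mx.
have F : map_mx (intr : int -> 'F_2) (usubmx Q *m Dl *m R) = 1%:M.
  by have := cX0; rewrite uX => /cong2_F2; rewrite map_mx1.
have dnz : forall j : 'I_n, (d`_j)%:~R = 1 :> 'F_2.
  move=> j; apply: F2_1; apply/eqP => hj.
  have := congr1 determinant F; rewrite det_map_mx det1 !det_mulmx det_diag.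
  rewrite !rmorphM rmorph_prod /= (bigD1 j) //= mxE hj mul0r mulr0 mul0r.
  by move/eqP; rewrite eq_sym oner_eq0.
have cD : cong 2 Dl 1%:M.
  apply/cong2_F2; apply/matrixP => i j; rewrite !mxE.
  by case: (i == j); rewrite ?mulr1n ?mulr0n ?dnz.
have cA : cong 2 (usubmx Q *m R) 1%:M.
  apply: cong_trans _ (_ : cong 2 (usubmx X0) 1%:M) => //; rewrite uX.
  by have := cong_mulr R (cong_mull (usubmx Q) (cong_sym cD)); rewrite mulmx1.
have dnz' : forall j : 'I_n, d`_j != 0.
  move=> j; apply/eqP => h; have := dnz j; rewrite h /= => /eqP.
  by rewrite eq_sym oner_eq0.
have hQ : sg *m Q = Q.
  have h1 : sg *m Q *m Dl = Q *m Dl.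
    have := congr1 (mulmx^~ (invmx R)) sX0; rewrite /= eX' !mulmxA !mulmxK //.
  apply/matrixP => i j; move/matrixP: h1 => /(_ i j).
  rewrite /Dl !mul_mx_diag !mxE; exact: (mulIf (dnz' j)).
exists (Q *m R); first by split; [rewrite mulmxA hQ | rewrite -mul_usub_mx].
have uJ : J \in unitmx.
  by case: (@mulmx1_unit _ _ J (- J)); rewrite // mulmxN JJ opprK.
have uLJ : L^T *m J \in unitmx by rewrite unitmx_mul unitmx_tr uL.
exists (invmx (L^T *m J) *m col_mx (invmx R^T) (0 : 'M[int]_(n, n))).
rewrite /Q !trmx_mul tr_col_mx trmx1 trmx0 !mulmxA.
rewrite -(mulmxA (R^T *m row_mx 1%:M 0) L^T J) mulmxK //.
by rewrite -mulmxA mul_row_col mul1mx mul0mx addr0 mulmxV // unitmx_tr.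
Qed.

Lemma part4_sec : exists2 g : imx n, Gamma2m2 m g & cocycle_of g = c.
Proof.
case: smith_part => Bp [sBp cBp] [W BJW].
set Bm := Pm *m W.
have sBm : sg *m Bm = - Bm by rewrite /Bm mulmxA sgPm mulNmx.
have PpBp : Pp *m Bp = Bp.
  have h : (Pp + Pp) *m Bp = Bp + Bp by rewrite Pp2 mulmxDl mul1mx sBp.
  by apply: addI2; rewrite -[RHS]h mulmxDl.
have i1 : Bp^T *m J *m Bp = 0 by apply: iso; left.
have i2 : Bp^T *m J *m Pp = 0 by apply: iso; left; split => //; apply: sgPp.
have i3 : Bm^T *m J *m Bm = 0 by apply: iso; right.
have i4 : Bp^T *m J *m Bm = 1%:M.
  by rewrite /Bm PmE mulmxBl mul1mx mulmxBr BJW mulmxA i2 mul0mx subr0.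
have i5 : Bm^T *m J *m Bp = - 1%:M.
  have := congr1 trmx i4; rewrite !trmx_mul JT trmxK trmx1 mulNmx mulmxN mulmxA.
  by move/eqP; rewrite eqr_oppLR => /eqP.
set g : imx n := row_mx Bp Bm.
have sgg : symplectic g.
  by rewrite /symplectic /g tr_row_mx mul_col_mx mul_col_row i1 i4 i5 i3.
have gD : sg *m g = g *m D.
  rewrite /g mul_mx_row sBp sBm /Dm mul_row_block !mulmx0 !mulmx1 addr0 add0r.
  by rewrite mulmxN mulmx1.
have tg : tau g = c *m g by rewrite tauE -mulmxA -gD esg !mulmxA DmK mul1mx.
exists g; last by rewrite /cocycle_of tg mulmxK // sympl_unit.
have eg : g = block_mx (usubmx Bp) (usubmx Bm) (dsubmx Bp) (dsubmx Bm).
  by rewrite block_mxEh !vsubmxK.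
have e4 : (usubmx Bp)^T *m dsubmx Bm - (dsubmx Bp)^T *m usubmx Bm = 1%:M.
  move: i4; rewrite -[Bp in Bp^T]vsubmxK -[Bm]vsubmxK tr_col_mx /Jmx mul_row_block.
  rewrite mul_row_col !(mulmx0, mulmx1, mulmxN, addr0, add0r, mulNmx).
  by rewrite col_mxKu col_mxKd addrC.
have cC : cong ((2 * m)%N%:Z) (dsubmx Bp) 0.
  have : cong ((2 * m)%N%:Z) Bp (E1 *m Bp).
    exists (D *m K *m Bp).
    by rewrite -{1}PpBp ePp mulmxDl addrAC subrr add0r -scalemxAl.
  move/cong_d; suff -> : dsubmx (E1 *m Bp) = 0 by [].
  by rewrite -[Bp]vsubmxK /E1 mul_block_col col_mxKd !mul0mx addr0.
have cB : cong ((2 * m)%N%:Z) (usubmx Bm) 0.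
  have : cong ((2 * m)%N%:Z) Bm (E2 *m W).
    exists (- (D *m K *m W)).
    by rewrite /Bm ePm mulmxBl addrAC subrr add0r scalerN -scalemxAl.
  move/cong_u; suff -> : usubmx (E2 *m W) = 0 by [].
  by rewrite -[W]vsubmxK /E2 mul_block_col col_mxKu !mul0mx addr0.
have d2 : (2 %| (2 * m)%N%:Z)%Z by rewrite PoszM dvdz_mulr.
have cD' : cong 2 (dsubmx Bm) 1%:M.
  have h1 : cong 2 (dsubmx Bm) ((usubmx Bp)^T *m dsubmx Bm).
    by have := cong_mulr (dsubmx Bm) (cong_tr (cong_sym cBp)); rewrite trmx1 mul1mx.
  apply: cong_trans h1 _.
  have -> : (usubmx Bp)^T *m dsubmx Bm = 1%:M + (dsubmx Bp)^T *m usubmx Bm.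
    by rewrite -e4 subrK.
  rewrite -{2}[1%:M]addr0; apply: cong_add; first exact: cong_refl.
  have := cong_mulr (usubmx Bm) (cong_tr (cong_dvd d2 cC)).
  by rewrite trmx0 mul0mx.
rewrite eg in sgg *; split.
- exact: sgg.
- by apply/congrP; rewrite block_mxKul.
- by apply/congrP; rewrite block_mxKdr.
- by apply/congrP; rewrite block_mxKur.
- by apply/congrP; rewrite block_mxKdl.
Qed.

End P4.

Theorem lemma4p2 (n m : nat) (hm : (1 <= m)%N) :
  (* the map lands in cocycles *)
  (forall g : imx n, Gamma2m2 m g -> cocycle m (cocycle_of g)) /\
  (* well-defined on double cosets *)
  (forall g g' : imx n, Gamma2m2 m g -> Gamma2m2 m g' ->
     same_dcoset m g g' -> cohomologous m (cocycle_of g) (cocycle_of g')) /\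
  (* injective on double cosets *)
  (forall g g' : imx n, Gamma2m2 m g -> Gamma2m2 m g' ->
     cohomologous m (cocycle_of g) (cocycle_of g') -> same_dcoset m g g') /\
  (* surjective onto H^1 *)
  (forall c : imx n, cocycle m c ->
     exists2 g : imx n, Gamma2m2 m g & cohomologous m c (cocycle_of g)).
Proof.
split; first exact: part1.
split; first by move=> g g' hg _; exact: part2.
split; first exact: part3.
move=> c [[sc /congrP [K eK]] ct].
have [g hg ecg] := part4_sec sc eK ct (erefl _) (erefl _) (erefl _).
exists g => //; exists 1%:M; split.
  by split; [exact: sympl1 | apply/congrP; exact: cong_refl].
by rewrite ecg tauE mulmx1 DmK mul1mx invmx1 mulmx1.
Qed.
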